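(* Every scattered compact Hausdorff space $K$ of height $2$ has the regular extension property.
   Context: Height $2$ means that the second Cantor--Bendixson derivative $K^{(2)}$ is empty (where $K'$ is the set of non-isolated points of $K$ and $K^{(2)}=(K')'$). $C(K)$ is the Banach space of real-valued continuous functions on $K$ with the supremum norm and $\mathbf 1_K$ its unit. For a closed $F\subseteq K$, a regular extension operator for $F$ in $K$ is a bounded linear map $E:C(F)\to C(K)$ with $E(f)|_F=f$ for all $f$, $\|E\|\le1$ and $E(\mathbf 1_F)=\mathbf 1_K$. $K$ has the regular extension property if every nonempty closed subset admits a regular extension operator in $K$. *)

(* Defs.v *)
From HB Require Import structures.
From mathcomp Require Import all_boot all_order all_algebra.
From mathcomp Require Import all_classical all_reals all_analysis.
Set Implicit Arguments. Unset Strict Implicit. Unset Printing Implicit Defensive.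
Import Order.TTheory GRing.Theory Num.Theory.
Import numFieldNormedType.Exports.
Local Open Scope classical_set_scope.
Local Open Scope ring_scope.

Definition isolated_in {T : topologicalType} (A : set T) (x : T) : Prop :=
  A x /\ exists U : set T, nbhs x U /\ U `&` A `<=` [set x].

Definition derived {T : topologicalType} (A : set T) : set T :=
  [set x | A x /\ ~ isolated_in A x].

Definition scattered (T : topologicalType) : Prop :=
  forall A : set T, A !=set0 -> exists x, isolated_in A x.

Definition height2 (T : topologicalType) : Prop :=
  derived (derived [set: T]) = set0.

(* C(F) is represented by functions K -> R continuous on F (the values
   outside F being irrelevant); E must be well defined on C(F), i.e. only
   depend on the restriction to F. *)
Definition regular_extension_operator {R : realType} {T : topologicalType}
    (F : set T) (E : (T -> R) -> (T -> R)) : Prop :=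
      (forall f : T -> R, {within F, continuous f} -> continuous (E f)) /\
      (forall f g : T -> R, {within F, continuous f} -> {within F, continuous g} ->
         (forall x, F x -> f x = g x) -> E f = E g) /\
      (forall (a b : R) (f g : T -> R), {within F, continuous f} -> {within F, continuous g} ->
         E (fun x => a * f x + b * g x) = (fun x => a * E f x + b * E g x)) /\
      (forall f : T -> R, {within F, continuous f} -> (forall x, F x -> E f x = f x)) /\
      (* ||E|| <= 1 for the sup norms *)
      (forall f : T -> R, {within F, continuous f} -> forall M : R,
         (forall y, F y -> `|f y| <= M) -> forall x, `|E f x| <= M) /\
      E (fun _ => 1) = (fun _ => 1).

Definition regular_extension_property (R : realType) (T : topologicalType) : Prop :=
  forall F : set T, closed F -> F !=set0 ->
    exists E : (T -> R) -> (T -> R), regular_extension_operator F E.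

(* Main.v *)
From HB Require Import structures.
Require Import Defs.
From mathcomp Require Import all_boot all_order all_algebra.
From mathcomp Require Import all_classical all_reals all_analysis.
From mathcomp Require Import finmap.
Import Order.TTheory GRing.Theory Num.Theory.
Import numFieldNormedType.Exports.
Local Open Scope classical_set_scope.
Local Open Scope ring_scope.

Lemma cover_of_compact (K : topologicalType) (k0 : K) :
  compact [set: K] -> @cover_compact K [set: K].
Proof.
move=> cK.
pose K' : ptopologicalType := HB.pack K (isPointed.Build K k0).
have e := @compact_cover K'.
have h : @compact K' setT := cK. rewrite e in h. exact h.
Qed.

Lemma derived_finite (K : topologicalType) :
  compact [set: K] -> height2 K ->
  exists s : {fset K}, forall p, derived [set: K] p -> p \in s.
Proof.
move=> cK h2.
have ex : forall i : K, exists U : set K,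
    nbhs i U /\ U `&` derived [set: K] `<=` [set i].
  move=> i; case: (pselect (derived [set: K] i)) => Di.
    have : ~ derived (derived [set: K]) i by rewrite h2.
    case: (pselect (isolated_in (derived [set: K]) i)) => [[_ [U [nU sU]]] _|ni].
      by exists U.
    by case; split.
  case: (pselect (isolated_in [set: K] i)) => [[_ [U [nU sU]]]|ni].
    exists U; split => // y [Uy _]; exact: sU.
  by exfalso; apply: Di; split.
have [g hg] := choice ex.
case: (pselect (exists k : K, True)); last first.
  by move=> nk; exists fset0 => p _; exfalso; apply: nk; exists p.
case=> k0 _; have cK' := @cover_of_compact K k0 cK.
have [D' _ cov] := cK' K setT (fun i => (g i)°) (fun i _ => @open_interior _ (g i))
  (fun x _ => ex_intro2 _ _ x I (proj1 (hg x))).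
exists D' => p Dp.
have [i Di pi] := cov p I.
have : p = i by apply: (proj2 (hg i)); split => //; exact: interior_subset.
by move=> ->.
Qed.

Lemma disjoint_nbhs (K : topologicalType) (s : {fset K}) :
  hausdorff_space K ->
  exists V : K -> set K, (forall p, nbhs p (V p)) /\
    forall p q y, p \in s -> q \in s -> p != q -> V p y -> V q y -> False.
Proof.
move=> hK.
have ex : forall p q : K, exists AB : set K * set K, p <> q ->
   [/\ nbhs p AB.1, nbhs q AB.2 & forall y, AB.1 y -> AB.2 y -> False].
  move=> p q.
  case: (pselect (exists A B, [/\ nbhs p A, nbhs q B &
        forall y, A y -> B y -> False])).
    by case=> A [B h]; exists (A, B).
  move=> nex; exists (setT, setT) => pq; exfalso; apply: pq; apply: hK.
  move=> A B pA qB.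
  case: (pselect (A `&` B !=set0)) => // h; exfalso; apply: nex.
  exists A, B; split => // y Ay By; apply: h; by exists y.
pose sep p := projT1 (choice (ex p)).
have hsep p := projT2 (choice (ex p)).
pose h p q := [set y | q != p -> (sep p q).1 y /\ (sep q p).2 y].
exists (fun p => \bigcap_(q in [set` s]) h p q); split.
  move=> p; apply: filter_bigI => q _.
  case: (eqVneq q p) => [->|qp].
    by apply: filterS filterT => y _; rewrite /h /= eqxx.
  have pq : p <> q by move=> e; rewrite e eqxx in qp.
  have [h1 _ _] := hsep p q pq.
  have qp' : q <> p by move=> e; apply: pq.
  have [_ h2 _] := hsep q p qp'.
  by apply: filterS (filterI h1 h2) => y [? ?] _.
move=> p q y ps qs pq Vp Vq.
have qp : q != p by rewrite eq_sym.
have [a _] := Vp q qs qp.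
have [_ b] := Vq p ps pq.
have pq' : p <> q by move=> e; rewrite e eqxx in pq.
have [_ _ c] := hsep p q pq'.
exact: c y a b.
Qed.

Theorem corollary3p13 (R : realType) (K : topologicalType) :
  compact [set: K] -> hausdorff_space K -> scattered K -> height2 K ->
  regular_extension_property R K.
Proof.
move=> cK hK _ h2 F cF [q0 Fq0].
have [s hs] := @derived_finite K cK h2.
have [V [nV dV]] := @disjoint_nbhs K s hK.
pose P y p := [/\ derived [set: K] p, F p, p \in s & V p y].
pose r y := match pselect (F y) with
  | left _ => y
  | right _ => match pselect (exists p, P y p) with
     | left h => projT1 (cid h)
     | right _ => q0 end end.
have rF y : F (r y).
  rewrite /r; case: pselect => // _; case: pselect => // h.
  by have [] := projT2 (cid h).
have rid y : F y -> r y = y by rewrite /r; case: pselect.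
exists (fun f x => f (r x)); split; [|split; [|split; [|split; [|split]]]].
- move=> f cf x.
  case: (pselect (isolated_in [set: K] x)) => [[_ [U [nU sU]]]|nix].
    move=> B /= nB; apply: filterS nU => y Uy.
    have -> : y = x by apply: sU.
    exact: nbhs_singleton nB.
  have Dx : derived [set: K] x by [].
  have xs := hs x Dx.
  case: (pselect (F x)) => Fx.
    have := (proj1 (subspace_continuousP F f) cf) x Fx.
    move=> cfx B /= nB; rewrite rid // in nB.
    have := cfx B nB => /= wB.
have {}wB : \forall y \near x, F y -> B (f y) by exact: wB.
    apply: filterS (filterI wB (nV x)) => y [wy Vy] /=.
    case: (pselect (F y)) => Fy; first by rewrite rid //; exact: wy.
    have Pyx : P y x by [].
    rewrite /r; case: pselect => // _; case: pselect => [h|]; last first.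
      by move=> nh; exfalso; apply: nh; exists x.
    have [Dp Fp ps Vp] := projT2 (cid h).
    case: (eqVneq (projT1 (cid h)) x) => [->|ne].
      exact: nbhs_singleton nB.
    by exfalso; exact: dV _ _ _ ps xs ne Vp Vy.
  have rq y : ~ F y -> V x y -> r y = q0.
    move=> Fy Vy; rewrite /r; case: pselect => // _; case: pselect => // h.
    have [Dp Fp ps Vp] := projT2 (cid h).
    have ne : projT1 (cid h) != x by apply/eqP => e; apply: Fx; rewrite -e.
    by exfalso; exact: dV _ _ _ ps xs ne Vp Vy.
  have nFx : nbhs x (~` F).
    by apply: open_nbhs_nbhs; split => //; exact: closed_openC.
  move=> B /= nB.
  rewrite (rq x Fx (nbhs_singleton (nV x))) in nB.
  apply: filterS (filterI nFx (nV x)) => y [Fy Vy] /=.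
  rewrite rq //; exact: nbhs_singleton nB.
- move=> f g _ _ e; apply: funext => x; exact: e.
- by [].
- by move=> f _ x Fx; rewrite rid.
- by move=> f _ M hM x; apply: hM.
- by [].
Qed.
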